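(* Let $a_1,a_2,a_3,a_4,a_5$ and $\alpha_1,\alpha_2,\alpha_3,\alpha_4,\alpha_5$ be positive real numbers with $\sum_{i=1}^5\alpha_i=\pi$ and $a_1\le a_2\le a_3\le a_4\le a_5$. Then $$\sum_{i=1}^5 a_i\cos\alpha_i\;\le\;\frac{1+\sqrt5}{4}\cdot\frac{1}{a_1a_2a_3a_4a_5}\left(a_1^2a_5^2a_2^2+a_5^2a_2^2a_3^2+a_2^2a_3^2a_4^2+a_3^2a_4^2a_1^2+a_4^2a_1^2a_5^2\right).$$ *)

(* Defs.v *)
From Stdlib Require Export Reals.

(* Main.v *)
Require Import Defs.
From Stdlib Require Import Reals Lra.
Open Scope R_scope.

Lemma quad (C y1 y2 y3 y4 y5 : R) (hC : 4*C*C - 2*C - 1 = 0) (hCp : 0 < C) (hd : 0 < 2*C-1) :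
  y1*y2+y2*y3+y3*y4+y4*y5-y5*y1 <= C*(y1*y1+y2*y2+y3*y3+y4*y4+y5*y5).
Proof.
  assert (HE : 2*(C*(y1*y1+y2*y2+y3*y3+y4*y4+y5*y5) - (y1*y2+y2*y3+y3*y4+y4*y5-y5*y1))
    - (2*C*(y1 + (2*C-1)*(y5-y2))^2 + (y2 - y3 + (2*C-1)*y5)^2 + (2*C-1)*(y3 - 2*C*y4 + y5)^2)
    = (4*C*C - 2*C - 1) * ((-2)*C*y4*y4 + (-2)*C*y5*y5 + (2)*y1*y2 + (2)*y3*y4 + (2)*y4*y5 + (-2)*y1*y5 + (4)*C*y2*y5 + (-2)*y2*y5 + (-2)*C*y2*y2 + (1)*y2*y2)).
  { ring. }
  rewrite hC, Rmult_0_l in HE.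
  assert (0 <= 2*C*(y1 + (2*C-1)*(y5-y2))^2) by (apply Rmult_le_pos; [lra| apply pow2_ge_0]).
  assert (0 <= (2*C-1)*(y3 - 2*C*y4 + y5)^2) by (apply Rmult_le_pos; [lra| apply pow2_ge_0]).
  pose proof (pow2_ge_0 (y2 - y3 + (2*C-1)*y5)). lra.
Qed.

Lemma core (C x1 x2 x3 x4 x5 s1 s2 s3 s4 s5 : R) (hC : 4*C*C - 2*C - 1 = 0) (hCp : 0 < C) (hd : 0 < 2*C-1)
  (hs : s1+s2+s3+s4+s5 = PI) :
  x1*x2*cos s1 + x2*x3*cos s2 + x3*x4*cos s3 + x4*x5*cos s4 + x5*x1*cos s5
  <= C*(x1*x1+x2*x2+x3*x3+x4*x4+x5*x5).
Proof.
  pose (b2 := s1). pose (b3 := s1+s2). pose (b4 := s1+s2+s3). pose (b5 := s1+s2+s3+s4).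
  assert (e1 : s1 = b2 - 0) by (unfold b2; ring).
  assert (e2 : s2 = b3 - b2) by (unfold b2, b3; ring).
  assert (e3 : s3 = b4 - b3) by (unfold b4, b3; ring).
  assert (e4 : s4 = b5 - b4) by (unfold b4, b5; ring).
  assert (e5 : s5 = PI - b5) by (unfold b5; lra).
  rewrite e1, e2, e3, e4, e5, !cos_minus, cos_PI, sin_PI, cos_0, sin_0.
  pose proof (quad C x1 (x2*cos b2) (x3*cos b3) (x4*cos b4) (x5*cos b5) hC hCp hd) as Q1.
  pose proof (quad C 0 (x2*sin b2) (x3*sin b3) (x4*sin b4) (x5*sin b5) hC hCp hd) as Q2.
  pose proof (sin2_cos2 b2). pose proof (sin2_cos2 b3). pose proof (sin2_cos2 b4). pose proof (sin2_cos2 b5).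
  unfold Rsqr in *.
  assert (x2*x2 = (x2*cos b2)*(x2*cos b2) + (x2*sin b2)*(x2*sin b2)) by nra.
  assert (x3*x3 = (x3*cos b3)*(x3*cos b3) + (x3*sin b3)*(x3*sin b3)) by nra.
  assert (x4*x4 = (x4*cos b4)*(x4*cos b4) + (x4*sin b4)*(x4*sin b4)) by nra.
  assert (x5*x5 = (x5*cos b5)*(x5*cos b5) + (x5*sin b5)*(x5*sin b5)) by nra.
  nra.
Qed.

Lemma sq_prod (p q a : R) : 0 <= p -> 0 <= q -> 0 <= a -> p*q = a*a -> sqrt p * sqrt q = a.
Proof. intros. rewrite <- sqrt_mult by lra. rewrite H2. apply sqrt_square. lra. Qed.

Theorem theorem1 (a1 a2 a3 a4 a5 t1 t2 t3 t4 t5 : R)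
  (ha1 : 0 < a1) (ha2 : 0 < a2) (ha3 : 0 < a3) (ha4 : 0 < a4) (ha5 : 0 < a5)
  (ht1 : 0 < t1) (ht2 : 0 < t2) (ht3 : 0 < t3) (ht4 : 0 < t4) (ht5 : 0 < t5)
  (hsum : t1 + t2 + t3 + t4 + t5 = PI)
  (h12 : a1 <= a2) (h23 : a2 <= a3) (h34 : a3 <= a4) (h45 : a4 <= a5) :
  a1 * cos t1 + a2 * cos t2 + a3 * cos t3 + a4 * cos t4 + a5 * cos t5 <=
  (1 + sqrt 5) / 4 * (1 / (a1 * a2 * a3 * a4 * a5)) *
  (a1 ^ 2 * a5 ^ 2 * a2 ^ 2 + a5 ^ 2 * a2 ^ 2 * a3 ^ 2 + a2 ^ 2 * a3 ^ 2 * a4 ^ 2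
   + a3 ^ 2 * a4 ^ 2 * a1 ^ 2 + a4 ^ 2 * a1 ^ 2 * a5 ^ 2).
Proof.
  pose proof (sqrt_sqrt 5 ltac:(lra)) as h5.
  assert (h5g : 1 < sqrt 5).
  { rewrite <- sqrt_1. apply sqrt_lt_1; lra. }
  set (C := (1 + sqrt 5) / 4).
  assert (hC : 4*C*C - 2*C - 1 = 0) by (unfold C; nra).
  assert (hCp : 0 < C) by (unfold C; lra).
  assert (hd : 0 < 2*C-1) by (unfold C; lra).
  set (p1 := a3*a1*a4/(a2*a5)). set (p2 := a1*a2*a5/(a4*a3)). set (p3 := a2*a4*a3/(a5*a1)).
  set (p4 := a4*a5*a1/(a3*a2)). set (p5 := a5*a3*a2/(a1*a4)).
  assert (q1 : 0 <= p1) by (unfold p1; unfold Rdiv; apply Rlt_le; repeat (apply Rmult_lt_0_compat || apply Rinv_0_lt_compat); assumption).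
  assert (q2 : 0 <= p2) by (unfold p2; unfold Rdiv; apply Rlt_le; repeat (apply Rmult_lt_0_compat || apply Rinv_0_lt_compat); assumption).
  assert (q3 : 0 <= p3) by (unfold p3; unfold Rdiv; apply Rlt_le; repeat (apply Rmult_lt_0_compat || apply Rinv_0_lt_compat); assumption).
  assert (q4 : 0 <= p4) by (unfold p4; unfold Rdiv; apply Rlt_le; repeat (apply Rmult_lt_0_compat || apply Rinv_0_lt_compat); assumption).
  assert (q5 : 0 <= p5) by (unfold p5; unfold Rdiv; apply Rlt_le; repeat (apply Rmult_lt_0_compat || apply Rinv_0_lt_compat); assumption).
  pose proof (core C (sqrt p1) (sqrt p2) (sqrt p3) (sqrt p4) (sqrt p5) t1 t2 t4 t5 t3 hC hCp hd
    ltac:(lra)) as H.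
  rewrite (sq_prod p1 p2 a1), (sq_prod p2 p3 a2), (sq_prod p3 p4 a4), (sq_prod p4 p5 a5),
    (sq_prod p5 p1 a3), !sqrt_sqrt in H; try lra;
    try (unfold p1, p2, p3, p4, p5; field; repeat split; lra).
  assert (E : C * (1 / (a1 * a2 * a3 * a4 * a5)) *
  (a1 ^ 2 * a5 ^ 2 * a2 ^ 2 + a5 ^ 2 * a2 ^ 2 * a3 ^ 2 + a2 ^ 2 * a3 ^ 2 * a4 ^ 2
   + a3 ^ 2 * a4 ^ 2 * a1 ^ 2 + a4 ^ 2 * a1 ^ 2 * a5 ^ 2) = C*(p1+p2+p3+p4+p5)).
  { unfold C, p1, p2, p3, p4, p5. field. repeat split; lra. }
  rewrite E. lra.
Qed.
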